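(* Let $\mathcal{X}=\{x_1,\dots,x_M\}$ and $\mathcal{Y}=\{y_1,\dots,y_N\}$ be finite sets (in this fixed enumeration), $p(x)$ a probability distribution on $\mathcal{X}$, and $c:\mathcal{X}\times\mathcal{Y}\to[0,\infty]$ a staircase nondecreasing cost function, i.e. (i) for all $1\le i<j\le M$ and all $y$, $c(x_i,y)=\infty$ implies $c(x_j,y)=\infty$; (ii) for all $1\le i<j\le N$ and all $x$, $c(x,y_i)<\infty$ implies $c(x,y_i)\le c(x,y_j)<\infty$. Assume that for every $x$ with $p(x)>0$ there is some $y$ with $c(x,y)<\infty$. For nonempty $\mathcal{S}\subseteq\mathcal{Y}$ let $\mathbf{P}_{\mathcal{S}}=\{p_{xy}\}$ be the deterministic matrix with $p_{xy}=1$ if $y=\min\big(\arg\min_{y'\in\mathcal{S}}c(x,y')\big)$ (minimum with respect to the enumeration order of $\mathcal{Y}$) and $p_{xy}=0$ otherwise, and let $\mathscr{C}(\mathcal{S})=\sum_{x,y}p(x)c(x,y)(\mathbf{P}_{\mathcal{S}})_{xy}$ (convention $0\cdot\infty=0$). Fix $y_0\in\arg\min_{y\in\mathcal{Y}}\mathscr{C}(\{y\})$, let $\mathcal{Y}'=\mathcal{Y}\setminus\{y_0\}$, and define the set function $f(\mathcal{A})=-\mathscr{C}(\mathcal{A}\cup\{y_0\})$ for $\mathcal{A}\subseteq\mathcal{Y}'$. Then $f$ is submodular on the subsets of $\mathcal{Y}'$.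
   Context: A set function $f$ on subsets of a finite set $\mathcal{Y}'$ is submodular if $f(\mathcal{A}\cup\{b\})+f(\mathcal{A}\cup\{c\})\ge f(\mathcal{A}\cup\{b,c\})+f(\mathcal{A})$ for all $\mathcal{A}\subseteq\mathcal{Y}'$ and distinct $b,c\in\mathcal{Y}'\setminus\mathcal{A}$ (equivalently, $f(\mathcal{A})+f(\mathcal{B})\ge f(\mathcal{A}\cup\mathcal{B})+f(\mathcal{A}\cap\mathcal{B})$ for all $\mathcal{A},\mathcal{B}$). *)

(* Defs.v *)
From mathcomp Require Import all_boot all_order all_algebra.
From mathcomp Require Import reals constructive_ereal.
Set Implicit Arguments. Unset Strict Implicit. Unset Printing Implicit Defensive.
Import Order.TTheory GRing.Theory Num.Theory.
Local Open Scope ring_scope.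
Local Open Scope ereal_scope.

Section Defs.
Variables (R : realType) (M N : nat).
Variable c : 'I_M -> 'I_N -> \bar R.

Definition argmin_set (S : {set 'I_N}) (x : 'I_M) : {set 'I_N} :=
  [set y in S | [forall y' in S, c x y <= c x y']].

Definition sel (S : {set 'I_N}) (x : 'I_M) : option 'I_N :=
  [pick y in argmin_set S x | [forall y' in argmin_set S x, (y <= y')%N]].

Definition Pmat (S : {set 'I_N}) (x : 'I_M) (y : 'I_N) : bool := sel S x == Some y.

(* expected cost C(S) = sum_{x,y} p(x) c(x,y) (P_S)_{xy}; in \bar R, 0 * +oo = 0 *)
Definition Ccost (p : 'I_M -> R) (S : {set 'I_N}) : \bar R :=
  \sum_(x < M) \sum_(y < N) ((p x)%:E * c x y * ((Pmat S x y)%:R)%:E).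
End Defs.

Definition submodular_on (R : realType) (T : finType) (Y' : {set T})
    (f : {set T} -> \bar R) : Prop :=
  forall (A : {set T}) (b c : T), A \subset Y' ->
    b \in Y' :\: A -> c \in Y' :\: A -> b != c ->
    f (A :|: [set b]) + f (A :|: [set c]) >= f (A :|: [set b; c]) + f A.

(* Main.v *)
Require Import Defs.
From mathcomp Require Import all_boot all_order all_algebra.
From mathcomp Require Import reals constructive_ereal.
From mathcomp Require Import lra.
Import Order.TTheory GRing.Theory Num.Theory.
Local Open Scope ring_scope.
Local Open Scope ereal_scope.

Section Aux.
Variables (R : realType) (M N : nat) (c : 'I_M -> 'I_N -> \bar R).

Lemma sel_spec (S : {set 'I_N}) x y1 : y1 \in S ->
  exists y, [/\ sel c S x = Some y, y \in S & forall y', y' \in S -> c x y <= c x y'].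
Proof.
move=> Sy1.
have [ym Sym minm] := @arg_minP _ _ _ y1 (mem S) (c x) Sy1.
have Aym : ym \in argmin_set c S x.
  rewrite inE; apply/andP; split; first exact: Sym.
  by apply/forall_inP => y' Sy'; exact: minm.
rewrite /sel; case: pickP => [y /andP[Ay _] | H].
  exists y; move: Ay; rewrite inE => /andP[Sy /forall_inP Hy]; split => //.
have [yn An minn] := arg_minnP (fun y : 'I_N => val y) Aym.
have := H yn; rewrite /=.
have -> : yn \in argmin_set c S x by exact: An.
have -> : [forall (y' | y' \in argmin_set c S x), (yn <= y')%N] by apply/forall_inP => y' Ay'; exact: minn.
by [].
Qed.

Definition T (p : 'I_M -> R) x S := \sum_(y < N) ((p x)%:E * c x y * ((Pmat c S x y)%:R)%:E).

Lemma T_sel p x S ys : sel c S x = Some ys -> T p x S = (p x)%:E * c x ys.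
Proof.
move=> Hs; rewrite /T (bigD1 ys) //= big1 => [|y ne].
  by rewrite /Pmat Hs eqxx mule1 adde0.
rewrite /Pmat Hs.
have -> : (Some ys == Some y) = false.
  by apply/eqP => -[] E; move: ne; rewrite E eqxx.
by rewrite mule0.
Qed.

End Aux.
Arguments T {R M N}.
Arguments sel_spec {R M N}.
Arguments T_sel {R M N c p x S ys}.

Lemma final (R : realType) (X Y Z W : \bar R) :
  0 <= X -> 0 <= Y -> 0 <= Z -> 0 <= W -> Z <= X -> X <= W -> Y <= W ->
  X + Y <= Z + W -> - Z + - W <= - X + - Y.
Proof.
case: W => [w||] X0 Y0 Z0 W0 ZX XW YW H.
- case: X X0 ZX XW H => [x||] //= X0 ZX XW H.
  case: Y Y0 YW H => [y||] //= Y0 YW H.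
  case: Z Z0 ZX H => [z||] //= Z0 ZX H.
  rewrite -!EFinD lee_fin in H; rewrite lee_fin in X0 Y0 Z0 W0 ZX XW YW.
  by rewrite -?EFinN -!EFinD lee_fin; lra.
- by rewrite /= addeNy leNye.
- by [].
Qed.

Theorem lemma1 (R : realType) (M N : nat) (p : 'I_M -> R)
    (c : 'I_M -> 'I_N -> \bar R) (y0 : 'I_N) :
  (forall x, (0 <= p x)%R) ->
  (\sum_(x < M) p x = 1)%R ->
  (forall x y, 0 <= c x y) ->
  (forall (i j : 'I_M), (i < j)%N -> forall y, c i y = +oo -> c j y = +oo) ->
  (forall (i j : 'I_N), (i < j)%N -> forall x,
      c x i < +oo -> c x i <= c x j /\ c x j < +oo) ->
  (forall x, (0 < p x)%R -> exists y, c x y < +oo) ->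
  (forall y, Ccost c p [set y0] <= Ccost c p [set y]) ->
  submodular_on [set~ y0] (fun A => - Ccost c p (A :|: [set y0])).
Proof.
move=> p0 _ c0 _ _ _ _ A b d _ _ _ _.
have Tge0 x S : 0 <= T c p x S.
  by apply: sume_ge0 => y _; rewrite mule_ge0 ?mule_ge0 ?lee_fin //; case: (Pmat _ _ _ _).
have Y0 S : y0 \in S :|: [set y0] by rewrite !inE eqxx orbT.
have mono x (S S' : {set 'I_N}) : S \subset S' -> T c p x (S' :|: [set y0]) <= T c p x (S :|: [set y0]).
  move=> sub.
  have [ys [Hs Sys _]] := sel_spec c _ x _ (Y0 S).
  have [ys' [Hs' _ Hm']] := sel_spec c _ x _ (Y0 S').
  rewrite (T_sel Hs) (T_sel Hs'); apply: lee_wpmul2l; first by rewrite lee_fin.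
  apply: Hm'; move: Sys; rewrite !inE => /orP[/(subsetP sub) ->|->] //; by rewrite orbT.
have key x : T c p x ((A :|: [set b]) :|: [set y0]) + T c p x ((A :|: [set d]) :|: [set y0])
    <= T c p x ((A :|: [set b; d]) :|: [set y0]) + T c p x (A :|: [set y0]).
  have [ya [Ha Sa Ma]] := sel_spec c _ x _ (Y0 A).
  have [yb [Hb Sb Mb]] := sel_spec c _ x _ (Y0 (A :|: [set b])).
  have [yd [Hd Sd Md]] := sel_spec c _ x _ (Y0 (A :|: [set d])).
  have [ye [He Se Me]] := sel_spec c _ x _ (Y0 (A :|: [set b; d])).
  rewrite (T_sel Ha) (T_sel Hb) (T_sel Hd) (T_sel He).
  have px : 0 <= (p x)%:E by rewrite lee_fin.
  have inA y : y \in A :|: [set y0] -> y \in (A :|: [set b]) :|: [set y0] /\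
     y \in (A :|: [set d]) :|: [set y0].
    by rewrite !inE => /orP[->|->]; rewrite ?orbT.
  have : [\/ ye \in A :|: [set y0], ye = b | ye = d].
    move: Se; rewrite !inE => /orP[/orP[->|/orP[/eqP->|/eqP->]]|->]; 
      by [constructor 1 | constructor 2 | constructor 3 | constructor 1; rewrite orbT].
  case=> [/Ma Hea | Eb | Ed].
  - apply: leeD; apply: lee_wpmul2l => //.
      apply: (le_trans (Mb ya _)); first by case: (inA _ Sa).
      exact: Hea.
    by apply: Md; case: (inA _ Sa).
  - apply: leeD; apply: lee_wpmul2l => //.
      by rewrite Eb; apply: Mb; rewrite !inE eqxx orbT.
    by apply: Md; case: (inA _ Sa).
  - rewrite addeC; apply: leeD; apply: lee_wpmul2l => //.
      by rewrite Ed; apply: Md; rewrite !inE eqxx orbT.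
    by apply: Mb; case: (inA _ Sa).
rewrite /=.
apply: final.
- by apply: sume_ge0 => x _; apply: (Tge0 x).
- by apply: sume_ge0 => x _; apply: (Tge0 x).
- by apply: sume_ge0 => x _; apply: (Tge0 x).
- by apply: sume_ge0 => x _; apply: (Tge0 x).
- apply: lee_sum => x _; apply: mono; apply/subsetP => y; rewrite !inE => /orP[->|->]; by rewrite ?orbT.
- apply: lee_sum => x _; apply: mono; apply/subsetP => y; rewrite !inE => ->; by rewrite ?orbT.
- apply: lee_sum => x _; apply: mono; apply/subsetP => y; rewrite !inE => ->; by rewrite ?orbT.
- rewrite /Ccost -!big_split /=; apply: lee_sum => x _.
  by have := key x; rewrite /T.
Qed.
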